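(* Let $T\in\mathcal C(\rho)$ and define $K_T\colon G\times Y\times G\times Y\to\mathbb C$ by $K_T(x,y,u,v)=(TK_{u,v})(x,y)$. Then for every $f\in H$ and $(x,y)\in G\times Y$, \[ (Tf)(x,y)=\int_{G\times Y}K_T(x,y,u,v)\,f(u,v)\,d\nu(u)\,d\lambda(v). \] Moreover, $K_T(x,y,u,v)=K_T(x-u,y,0,v)$ for all $u,x\in G$, $v,y\in Y$, and $K_T(\cdot,\cdot,0,v)\in H$ for every $v\in Y$ and $\overline{K_T(0,y,\cdot,\cdot)}\in H$ for every $y\in Y$.
   Context: Let $G$ be a locally compact abelian group (written additively) with Haar measure $\nu$, and $(Y,\lambda)$ a measure space. Let $H$ be a reproducing kernel Hilbert space of complex functions on $G\times Y$ whose inner product is that of $L^2(G\times Y,\nu\otimes\lambda)$, with reproducing kernel $(K_{x,y})_{(x,y)\in G\times Y}$ (so $f(x,y)=\langle f,K_{x,y}\rangle$ for $f\in H$). Assume $K_{x,y}(u,v)=K_{0,y}(u-x,v)$ for all $u,x\in G$, $v,y\in Y$. For $a\in G$ let $\rho(a)$ be the unitary operator on $H$ given by $(\rho(a)f)(x,y)=f(x-a,y)$, and $\mathcal C(\rho)=\{S\in\mathcal B(H): S\rho(a)=\rho(a)S\ \forall a\in G\}$. *)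

(* Defs.v *)
From HB Require Import structures.
From mathcomp Require Import all_boot all_order all_algebra.
From mathcomp Require Import all_classical all_reals all_analysis.
From mathcomp Require Import complex.

Set Implicit Arguments.
Unset Strict Implicit.
Unset Printing Implicit Defensive.

Import Order.TTheory GRing.Theory Num.Theory.
Local Open Scope classical_set_scope.
Local Open Scope ring_scope.

Definition ptype (G : topologicalZmodType) : Type := G.
HB.instance Definition _ (G : topologicalZmodType) := Choice.on (ptype G).
HB.instance Definition _ (G : topologicalZmodType) := isPointed.Build (ptype G) 0.
Notation Borel G := (g_sigma_algebraType (@open G : set (set (ptype G)))).

Section Defs.
Variable R : realType.

Definition LCA_group (G : topologicalZmodType) : Prop :=
  hausdorff_space G /\ locally_compact [set: G].

Definition haar_measure (G : topologicalZmodType)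
    (nu : {measure set Borel G -> \bar R}) : Prop :=
  [/\ (forall (a : G) (A : set (Borel G)), measurable A ->
         nu [set a + x | x in (A : set G)] = nu A),
      (forall K : set (Borel G), compact (K : set G) -> (nu K < +oo)%E),
      (forall U : set (Borel G), open (U : set G) -> U !=set0 -> (0 < nu U)%E),
      (forall A : set (Borel G), measurable A ->
         nu A = ereal_inf [set nu U | U in [set U : set (Borel G) | open (U : set G) /\ A `<=` U]]) &
      (forall U : set (Borel G), open (U : set G) ->
         nu U = ereal_sup [set nu K | K in [set K : set (Borel G) | compact (K : set G) /\ K `<=` U]])].

Definition is_product_measure {d d'} {G : measurableType d} {Y : measurableType d'}
    (nu : {measure set G -> \bar R}) (lam : {measure set Y -> \bar R})
    (m : {measure set (G * Y) -> \bar R}) : Prop :=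
  forall (A : set G) (B : set Y), measurable A -> measurable B ->
    m (A `*` B) = (nu A * lam B)%E.

Context {dT : measure_display} {T : measurableType dT}.
Variable m : {measure set T -> \bar R}.

Definition cmeasurable (h : T -> R[i]) : Prop :=
  measurable_fun [set: T] (fun p => complex.Re (h p)) /\
  measurable_fun [set: T] (fun p => complex.Im (h p)).

Definition cintegrable (h : T -> R[i]) : Prop :=
  m.-integrable [set: T] (fun p => (complex.Re (h p))%:E) /\
  m.-integrable [set: T] (fun p => (complex.Im (h p))%:E).

Definition cintegral (h : T -> R[i]) : R[i] :=
  Complex (Rintegral m [set: T] (fun p => complex.Re (h p)))
          (Rintegral m [set: T] (fun p => complex.Im (h p))).

Definition L2 (f : T -> R[i]) : Prop :=
  cmeasurable f /\
  m.-integrable [set: T] (fun p => ((complex.Re (f p)) ^+ 2 + (complex.Im (f p)) ^+ 2)%:E).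

Definition L2_inner (f g : T -> R[i]) : R[i] :=
  cintegral (fun p => f p * conjc (g p)).

Definition L2_norm2 (f : T -> R[i]) : R := complex.Re (L2_inner f f).

Definition L2_hilbert_subspace (H : set (T -> R[i])) : Prop :=
  [/\ H `<=` L2,
      H (fun=> 0),
      (forall f g, H f -> H g -> H (f \+ g)),
      (forall (c : R[i]) f, H f -> H (fun p => c * f p)) &
      (forall u : nat -> T -> R[i], (forall n, H (u n)) ->
         (forall e : R, 0 < e -> exists N, forall n k, (N <= n)%N -> (N <= k)%N ->
            L2_norm2 (u n \- u k) < e) ->
         exists2 g, H g & forall e : R, 0 < e -> exists N, forall n, (N <= n)%N ->
            L2_norm2 (u n \- g) < e)].

(* S is a bounded linear operator on H, i.e. S is in B(H)
   (only its values on H are relevant). *)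
Definition bounded_operator (H : set (T -> R[i])) (S : (T -> R[i]) -> (T -> R[i])) : Prop :=
  [/\ (forall f, H f -> H (S f)),
      (forall f g, H f -> H g -> S (f \+ g) = S f \+ S g),
      (forall (c : R[i]) f, H f -> S (fun p => c * f p) = (fun p => c * S f p)) &
      (exists M : R, forall f, H f -> L2_norm2 (S f) <= M * L2_norm2 f)].

End Defs.

Section Setting.
Variable R : realType.
Context {d' : measure_display} {G : topologicalZmodType} {Y : measurableType d'}.

Definition rho (a : G) (f : Borel G * Y -> R[i]) : Borel G * Y -> R[i] :=
  fun p => f ((p.1 : G) - a, p.2).

Definition reproducing_kernel (m : {measure set (Borel G * Y) -> \bar R})
    (H : set (Borel G * Y -> R[i])) (K : G -> Y -> Borel G * Y -> R[i]) : Prop :=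
  forall x y, H (K x y) /\ forall f, H f -> f (x, y) = L2_inner m f (K x y).

Definition commutant (m : {measure set (Borel G * Y) -> \bar R})
    (H : set (Borel G * Y -> R[i])) (S : (Borel G * Y -> R[i]) -> (Borel G * Y -> R[i])) : Prop :=
  bounded_operator m H S /\
  forall (a : G) f, H f -> S (rho a f) = rho a (S f).

End Setting.

(* Main.v *)
Require Import Defs.
From HB Require Import structures.
From mathcomp Require Import all_boot all_order all_algebra.
From mathcomp Require Import all_classical all_reals all_analysis measurable_realfun.
From mathcomp Require Import complex ring lra.
Set Implicit Arguments.
Unset Strict Implicit.
Import Order.TTheory GRing.Theory Num.Theory.
Local Open Scope classical_set_scope.
Local Open Scope ring_scope.
Local Open Scope complex_scope.

Ltac ceq := apply/eqP; rewrite eq_complex /=; apply/andP; split; apply/eqP.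

Section Cplx.
Variable R : realType.
Definition sqc (z : R[i]) : R := complex.Re z ^+ 2 + complex.Im z ^+ 2.
Lemma sqc_ge0 z : 0 <= sqc z.
Proof. by rewrite /sqc addr_ge0 // sqr_ge0. Qed.
Lemma sqc_eq0 z : sqc z = 0 -> z = 0.
Proof.
case: z => a b; rewrite /sqc /= => h.
have /andP[ha hb] : (a ^+ 2 == 0) && (b ^+ 2 == 0) by rewrite -paddr_eq0 ?sqr_ge0 // h.
by move: ha hb; rewrite !sqrf_eq0 => /eqP -> /eqP ->.
Qed.
Lemma eps_small (e : R) : 0 < e -> exists N0 : nat, forall n, (N0 <= n)%N -> (n.+1%:R)^-1 < e.
Proof.
move=> e0; exists (Num.Def.archi_bound e^-1) => n hn.
have he : 0 <= e^-1 by rewrite invr_ge0 ltW.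
have h := archi_boundP he.
rewrite invf_plt ?posrE ?ltr0Sn //; apply: (lt_le_trans h).
by rewrite ler_nat; apply: leq_trans hn _.
Qed.
Lemma conjcD (a b : R[i]) : conjc (a + b) = conjc a + conjc b.
Proof. by case: a => ? ?; case: b => ? ?; simpc; ceq => /=; ring. Qed.
Lemma conjcM (a b : R[i]) : conjc (a * b) = conjc a * conjc b.
Proof. by case: a => ? ?; case: b => ? ?; simpc; ceq => /=; ring. Qed.
End Cplx.
Section Hilb.
Variable R : realType.
Local Notation C := R[i].
Variables (V : Type) (H : V -> Prop) (add : V -> V -> V) (scal : C -> V -> V)
  (ip : V -> V -> C) (v0 : V).
Hypothesis H0 : H v0.
Hypothesis Hadd : forall f g, H f -> H g -> H (add f g).
Hypothesis Hscal : forall c f, H f -> H (scal c f).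
Hypothesis ipD : forall f g h, H f -> H g -> H h -> ip (add f g) h = ip f h + ip g h.
Hypothesis ipZ : forall c f h, H f -> H h -> ip (scal c f) h = c * ip f h.
Hypothesis ipC : forall f g, H f -> H g -> ip g f = conjc (ip f g).
Hypothesis ipP : forall f, H f -> 0 <= complex.Re (ip f f).

Local Notation N f := (complex.Re (ip f f)).

Lemma ipDr f g h : H f -> H g -> H h -> ip h (add f g) = ip h f + ip h g.
Proof.
move=> Hf Hg Hh; rewrite (ipC (Hadd Hf Hg) Hh) (ipD Hf Hg Hh) conjcD.
by rewrite -(ipC Hf Hh) -(ipC Hg Hh).
Qed.

Lemma ipZr c f h : H f -> H h -> ip h (scal c f) = conjc c * ip h f.
Proof.
move=> Hf Hh; rewrite (ipC (Hscal c Hf) Hh) (ipZ c Hf Hh) conjcM.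
by rewrite -(ipC Hf Hh).
Qed.

Lemma ipff f : H f -> ip f f = (N f)%:C.
Proof.
move=> Hf; have := ipC Hf Hf; case: (ip f f) => a b /= [] hb.
have -> : b = 0 by lra.
by [].
Qed.

Lemma N_scal c f : H f -> N (scal c f) = sqc c * N f.
Proof.
move=> Hf; rewrite (ipZ c Hf (Hscal c Hf)) (ipZr c Hf Hf) (ipff Hf).
rewrite /sqc; case: c => x y; simpc => /=; ring.
Qed.

Lemma N_adds f g b : H f -> H g ->
  N (add f (scal b g)) = N f + sqc b * N g + 2 * complex.Re (conjc b * ip f g).
Proof.
move=> Hf Hg; have Hbg := Hscal b Hg.
rewrite (ipD Hf Hbg (Hadd Hf Hbg)) (ipDr Hf Hbg Hf) (ipDr Hf Hbg Hbg).
rewrite (ipZ b Hg Hf) (ipZ b Hg Hbg) (ipZr b Hg Hf) (ipZr b Hg Hg).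
rewrite (ipC Hf Hg) (ipff Hf) (ipff Hg).
rewrite /sqc; move: (ip f g) => z; clear Hbg; case: z => a c; case: b => x y.
simpc => /=; ring.
Qed.

Lemma N_add f g : H f -> H g ->
  N (add f g) = N f + N g + 2 * complex.Re (ip f g).
Proof.
move=> Hf Hg.
rewrite (ipD Hf Hg (Hadd Hf Hg)) (ipDr Hf Hg Hf) (ipDr Hf Hg Hg).
rewrite (ipC Hf Hg) (ipff Hf) (ipff Hg).
move: (ip f g) => z; case: z => a c.
simpc => /=; ring.
Qed.

Lemma CS f g : H f -> H g -> sqc (ip f g) <= N f * N g.
Proof.
move=> Hf Hg.
have key : forall t : R, 0 <= N f + t ^+ 2 * sqc (ip f g) * N g - 2 * t * sqc (ip f g).
  move=> t; have := ipP (Hadd Hf (Hscal (- (t%:C) * ip f g) Hg)).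
  rewrite N_adds //.
  have -> : sqc (- t%:C * ip f g) = t ^+ 2 * sqc (ip f g).
    by rewrite /sqc; case: (ip f g) => a c; simpc => /=; ring.
  have -> : complex.Re (conjc (- t%:C * ip f g) * ip f g) = - t * sqc (ip f g).
    by rewrite /sqc; case: (ip f g) => a c; simpc => /=; ring.
  by move=> h; apply: le_trans h _; rewrite le_eqVlt; apply/orP; left; apply/eqP; ring.
have a0 := ipP Hf; have b0 := ipP Hg; have q0 := sqc_ge0 (ip f g).
move: key; set a := N f; set b := N g; set q := sqc (ip f g) => key.
have [bgt0|] := ltP 0 b.
  have := key b^-1.
  have e1 : b^-1 ^+ 2 * q * b = b^-1 * q by field; rewrite gt_eqF.
  rewrite e1 => h.
  have h2 : b^-1 * q <= a by lra.
  by rewrite -ler_pdivrMr // mulrC.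
move=> ble; have b00 : b = 0 by apply/eqP; rewrite eq_le ble b0.
rewrite b00 mulr0; move: key; rewrite b00 => key.
have [qgt0|] := ltP 0 q; last by [].
have := key ((a + 1) / (2 * q)).
have -> : 2 * ((a + 1) / (2 * q)) * q = a + 1.
  by field; rewrite gt_eqF.
rewrite mulr0 addr0 => h; lra.
Qed.

Variable phi : V -> C.
Variable M : R.
Hypothesis phiD : forall f g, H f -> H g -> phi (add f g) = phi f + phi g.
Hypothesis phiZ : forall c f, H f -> phi (scal c f) = c * phi f.
Hypothesis phiB : forall f, H f -> sqc (phi f) <= M * N f.
Hypothesis complete : forall u : nat -> V, (forall n, H (u n)) ->
  (forall e : R, 0 < e -> exists N0, forall n k, (N0 <= n)%N -> (N0 <= k)%N ->
      N (add (u n) (scal (-1) (u k))) < e) ->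
  exists2 g, H g & forall e : R, 0 < e -> exists N0, forall n, (N0 <= n)%N ->
      N (add (u n) (scal (-1) g)) < e.

Lemma riesz : exists2 g, H g & forall f, H f -> phi f = ip f g.
Proof.
case: (pselect (forall f, H f -> phi f = 0)) => [allz|nallz].
  exists (scal 0 v0); first exact: Hscal.
  by move=> f Hf; rewrite (ipZr 0 H0 Hf) (allz f Hf) conjc0 mul0r.
move/existsNP: nallz => [f1 /not_implyP [Hf1 nz]].
pose A h := H h /\ phi h = 1.
have Hh1 : A (scal (phi f1)^-1 f1).
  split; first exact: Hscal.
  by rewrite phiZ // mulVf //; apply/eqP.
pose S := [set N h | h in A].
have S0 : S !=set0 by exists (N (scal (phi f1)^-1 f1)); exists (scal (phi f1)^-1 f1).
have Slb : lbound S 0 by move=> _ [h [Hh _] <-]; exact: ipP.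
have hinf : has_inf S by split => //; exists 0.
set d := inf S.
have dle : forall h, A h -> d <= N h.
  by move=> h Ah; apply: ge_inf; [exists 0 | exists h].
have d0 : 0 <= d by apply: lb_le_inf.
have : forall n : nat, exists h, A h /\ N h < d + (n.+1%:R)^-1.
  move=> n.
  have ep : 0 < (n.+1%:R : R)^-1 by rewrite invr_gt0 ltr0Sn.
  have [x [h Ah <-] hlt] := @inf_adherent R S _ ep hinf.
  by exists h.
move/choice => [u hu].
have Hu : forall n, H (u n) by move=> n; case: (hu n) => [[]].
have phiu : forall n, phi (u n) = 1 by move=> n; case: (hu n) => [[]].
have Nu : forall n, N (u n) < d + (n.+1%:R)^-1 by move=> n; case: (hu n).
have sqcN1 : sqc (-1 : R[i]) = 1 by rewrite /sqc /=; ring.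
have N_sub : forall f g, H f -> H g ->
    N (add f (scal (-1) g)) = N f + N g - 2 * complex.Re (ip f g).
  move=> f g Hf Hg; rewrite N_adds // sqcN1.
  by move: (ip f g) => z; case: z => a c; simpc => /=; ring.
have cauchy : forall n k,
    N (add (u n) (scal (-1) (u k))) <= 2 * (n.+1%:R)^-1 + 2 * (k.+1%:R)^-1.
  move=> n k; rewrite N_sub //.
  pose m := scal ((2^-1 : R)%:C) (add (u n) (u k)).
  have Am : A m.
    split; first by apply: Hscal; apply: Hadd.
    rewrite /m (phiZ _ (Hadd (Hu n) (Hu k))) (phiD (Hu n) (Hu k)) !phiu.
    by ceq; simpc => /=; field.
  have := dle m Am; rewrite /m (N_scal _ (Hadd (Hu n) (Hu k))) (N_add (Hu n) (Hu k)).
  have -> : sqc ((2^-1 : R)%:C) = 4^-1 by rewrite /sqc /=; field.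
  have := Nu n; have := Nu k.
  move: (n.+1%:R^-1 : R) (k.+1%:R^-1 : R) => ea eb. lra.
have cc : forall e : R, 0 < e -> exists N0, forall n k, (N0 <= n)%N -> (N0 <= k)%N ->
      N (add (u n) (scal (-1) (u k))) < e.
  move=> e e0; have e4 : 0 < e / 4 by rewrite divr_gt0.
  have [N0 hN0] := eps_small e4.
  exists N0 => n k hn hk; apply: le_lt_trans (cauchy n k) _.
  have := hN0 n hn; have := hN0 k hk.
  move: (n.+1%:R^-1 : R) (k.+1%:R^-1 : R) => ea eb. lra.
have [h0 Hh0 conv] := complete Hu cc.
have Nge : forall n, 0 <= N (add (u n) (scal (-1) h0)).
  by move=> n; apply: ipP; apply: Hadd; [exact: Hu | exact: Hscal].
have phih0 : phi h0 = 1.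
  set z := 1 - phi h0.
  have hz : forall n, sqc z <= M * N (add (u n) (scal (-1) h0)).
    move=> n; have := phiB (Hadd (Hu n) (Hscal (-1) Hh0)).
    rewrite (phiD (Hu n) (Hscal (-1) Hh0)) (phiZ _ Hh0) phiu.
    by rewrite /z mulN1r.
  have : sqc z = 0.
    apply/eqP; rewrite eq_le sqc_ge0 andbT; apply/negP => /negP; rewrite -ltNge => qpos.
    pose M' := `|M| + 1.
    have M'0 : 0 < M' by have := normr_ge0 M; rewrite /M'; lra.
    have [N0 hN0] := conv (sqc z / M') (divr_gt0 qpos M'0).
    have h1 := hz N0; have h2 := hN0 N0 (leqnn _); have h3 := Nge N0.
    have hM : M <= `|M| := ler_norm M.
    have h4 : M * N (add (u N0) (scal (-1) h0)) <= M' * N (add (u N0) (scal (-1) h0)).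
      by apply: ler_wpM2r => //; rewrite /M'; lra.
    have h5 : M' * N (add (u N0) (scal (-1) h0)) < M' * (sqc z / M') by rewrite ltr_pM2l.
    have h6 : M' * (sqc z / M') = sqc z by field; rewrite gt_eqF.
    suff : sqc z < sqc z by rewrite ltxx.
    lra.
  move/sqc_eq0; rewrite /z => /eqP; rewrite subr_eq0 => /eqP <-.
  done.
have Ah0 : A h0 by [].
have Nh0 : N h0 <= d.
  apply/ler_addgt0Pr => e e0.
  have e4 : 0 < e / 4 by rewrite divr_gt0.
  have [N1 hN1] := conv (e / 4) e4.
  have [N2 hN2] := eps_small e4.
  pose n := maxn N1 N2.
  have h1 := hN1 n (leq_maxl _ _); have h2 := hN2 n (leq_maxr _ _).
  have H2u := Hscal (2%:R)%:C (Hu n).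
  have HN1 := Hscal (-1) Hh0.
  pose w := add (scal (2%:R)%:C (u n)) (scal (-1) h0).
  have Aw : A w.
    split; first exact: Hadd.
    rewrite /w (phiD H2u HN1) (phiZ _ (Hu n)) (phiZ _ Hh0) phiu phih0.
    by ceq; simpc => /=; ring.
  have := dle w Aw.
  rewrite /w (N_adds (-1) H2u Hh0) (N_scal _ (Hu n)) (ipZ _ (Hu n) Hh0) sqcN1.
  have -> : sqc ((2%:R : R)%:C) = 4 by rewrite /sqc /=; ring.
  have -> : complex.Re (conjc (-1) * ((2%:R : R)%:C * ip (u n) h0)) = - 2 * complex.Re (ip (u n) h0).
    by move: (ip (u n) h0) => z; case: z => a c; simpc => /=; ring.
  have := N_sub _ _ (Hu n) Hh0.
  have := Nu n.
  move: h2 (Nu n); move: (n.+1%:R^-1 : R) => ea.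
  lra.
have orth : forall k, H k -> phi k = 0 -> ip h0 k = 0.
  move=> k Hk phik.
  have key : forall t, 0 <= sqc t * N k + 2 * complex.Re (conjc t * ip h0 k).
    move=> t; have Htk := Hscal t Hk.
    have At : A (add h0 (scal t k)).
      split; first exact: Hadd.
      by rewrite (phiD Hh0 Htk) (phiZ _ Hk) phik mulr0 addr0.
    have := dle _ At; rewrite (N_adds t Hh0 Hk); lra.
  have a0 := ipP Hk.
  move: key a0; set z := ip h0 k; set a := N k => key a0.
  pose s := (a + 1)^-1.
  have s0 : 0 < s by rewrite invr_gt0; lra.
  have hs1 : s * (a + 1) = 1 by rewrite mulVf //; apply/eqP; lra.
  have := key (- (s%:C) * z).
  have -> : sqc (- s%:C * z) = s ^+ 2 * sqc z.
    by rewrite /sqc; case: (z) => x y; simpc => /=; ring.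
  have -> : complex.Re (conjc (- s%:C * z) * z) = - s * sqc z.
    by rewrite /sqc; case: (z) => x y; simpc => /=; ring.
  move=> h.
  have q0 := sqc_ge0 z.
  have hsa : s * a < 1 by move: hs1; rewrite mulrDr mulr1 => hs1; lra.
  have h' : 0 <= s * (sqc z * (s * a - 2)).
    by apply: le_trans h _; rewrite le_eqVlt; apply/orP; left; apply/eqP; ring.
  rewrite pmulr_rge0 // in h'.
  have : sqc z = 0.
    apply/eqP; rewrite eq_le q0 andbT.
    have h2 : 0 < 2 - s * a by lra.
    rewrite -(pmulr_rle0 _ h2) mulrC.
    have -> : sqc z * (2 - s * a) = - (sqc z * (s * a - 2)) by ring.
    by rewrite oppr_le0.
  by move/sqc_eq0.
have Nh0pos : 0 < N h0.
  have := phiB Hh0; rewrite phih0.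
  have -> : sqc (1 : R[i]) = 1 by rewrite /sqc /=; ring.
  have := ipP Hh0; rewrite le_eqVlt => /orP [/eqP <-| //]; rewrite mulr0 => h.
  by have := lt_le_trans ltr01 h; rewrite ltxx.
exists (scal ((N h0)^-1)%:C h0); first exact: Hscal.
move=> f Hf.
rewrite (ipZr _ Hh0 Hf).
have Hk := Hadd Hf (Hscal (- phi f) Hh0).
have k0 := orth _ Hk.
rewrite (phiD Hf (Hscal (- phi f) Hh0)) (phiZ _ Hh0) phih0 mulr1 addrN in k0.
have {}k0 := k0 erefl.
rewrite (ipDr Hf (Hscal (- phi f) Hh0) Hh0) (ipZr _ Hh0 Hh0) (ipff Hh0) in k0.
have e2 : ip f h0 = conjc (ip h0 f) := ipC Hh0 Hf.
have e3 : ip h0 f = - (conjc (- phi f) * (N h0)%:C).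
  by apply/eqP; rewrite -addr_eq0 k0.
rewrite e2 e3.
have nz0 : N h0 != 0 by rewrite gt_eqF.
move: nz0; move: (N h0) => r nz0.
case: (phi f) => x y; simpc; ceq => /=; field => //.
Qed.
End Hilb.

Section Conc.
Variable R : realType.
Context {dT : measure_display} {T : measurableType dT}.
Variable m : {measure set T -> \bar R}.

Definition re (f : T -> R[i]) : T -> R := fun p => complex.Re (f p).
Definition im (f : T -> R[i]) : T -> R := fun p => complex.Im (f p).
Definition RL2 (a : T -> R) :=
  measurable_fun setT a /\ m.-integrable setT (fun p => (a p ^+ 2)%:E).
Definition P (a b : T -> R) := Rintegral m setT (fun p => a p * b p).

Lemma L2_RL2 f : L2 m f -> RL2 (re f) /\ RL2 (im f).
Proof.
case=> [[mr mi] intf]; split; split => //.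
- apply: (le_integrable measurableT _ _ intf).
  + by apply/measurable_EFinP; exact: measurable_funX.
  + move=> p _; rewrite !abse_EFin lee_fin !ger0_norm ?addr_ge0 ?sqr_ge0 //.
    by rewrite lerDl sqr_ge0.
- apply: (le_integrable measurableT _ _ intf).
  + by apply/measurable_EFinP; exact: measurable_funX.
  + move=> p _; rewrite !abse_EFin lee_fin !ger0_norm ?addr_ge0 ?sqr_ge0 //.
    by rewrite lerDr sqr_ge0.
Qed.

Lemma prod_int a b : RL2 a -> RL2 b -> m.-integrable setT (EFin \o (fun p => a p * b p)).
Proof.
move=> [ma ia] [mb ib].
have iab : m.-integrable setT (fun p => (a p ^+ 2 + b p ^+ 2)%:E).
  by apply: (eq_integrable measurableT _ _ _ (integrableD measurableT ia ib)) => p _ /=; rewrite EFinD.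
apply: (le_integrable measurableT _ _ iab).
  by apply/measurable_EFinP; exact: measurable_funM.
move=> p _; rewrite /comp !abse_EFin lee_fin (ger0_norm (addr_ge0 (sqr_ge0 _) (sqr_ge0 _))).
rewrite normrM.
have hx : a p ^+ 2 = `|a p| ^+ 2 by rewrite real_normK // num_real.
have hy : b p ^+ 2 = `|b p| ^+ 2 by rewrite real_normK // num_real.
rewrite hx hy; have := normr_ge0 (a p); have := normr_ge0 (b p).
move: `|a p| `|b p| => x y hy0 hx0; nra.
Qed.

Lemma intZ x a c : RL2 a -> RL2 c ->
  m.-integrable setT (EFin \o (fun p => x * (a p * c p))).
Proof.
move=> ha hc; apply: (eq_integrable measurableT _ _ _ (integrableZl measurableT x (prod_int ha hc))) => p _ /=.
by rewrite EFinM.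
Qed.

Lemma PL x y a b c : RL2 a -> RL2 b -> RL2 c ->
  P (fun p => x * a p + y * b p) c = x * P a c + y * P b c.
Proof.
move=> ha hb hc; rewrite /P.
have -> : (fun p => (x * a p + y * b p) * c p) = (fun p => x * (a p * c p) + y * (b p * c p)).
  by apply: funext => p; ring.
rewrite RintegralD //; try exact: intZ.
by rewrite !RintegralZl //; exact: prod_int.
Qed.

Lemma PC a b : P a b = P b a.
Proof. by rewrite /P; congr Rintegral; apply: funext => p; rewrite mulrC. Qed.

Lemma P_ge0 a : 0 <= P a a.
Proof. by apply: Rintegral_ge0 => p _; rewrite -expr2 sqr_ge0. Qed.

Lemma ip_eq f g : L2 m f -> L2 m g ->
  L2_inner m f g = Complex (P (re f) (re g) + P (im f) (im g)) (P (im f) (re g) - P (re f) (im g)).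
Proof.
move=> /L2_RL2 [rf if_] /L2_RL2 [rg ig].
rewrite /L2_inner /cintegral /P.
congr Complex.
- have -> : (fun p => complex.Re (f p * conjc (g p))) = (fun p => re f p * re g p + im f p * im g p).
    by apply: funext => p; rewrite /re /im; case: (f p) => ? ?; case: (g p) => ? ?; simpc.
  by rewrite RintegralD //; exact: prod_int.
- have -> : (fun p => complex.Im (f p * conjc (g p))) = (fun p => im f p * re g p - re f p * im g p).
    apply: funext => p; rewrite /re /im; case: (f p) => ? ?; case: (g p) => ? ?; simpc => /=; ring.
  by rewrite RintegralB //; exact: prod_int.
Qed.

Lemma reD f g : re (f \+ g) = fun p => 1 * re f p + 1 * re g p.
Proof. by apply: funext => p; rewrite /re /= !mul1r; case: (f p) => ? ?; case: (g p) => ? ?. Qed.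
Lemma imD f g : im (f \+ g) = fun p => 1 * im f p + 1 * im g p.
Proof. by apply: funext => p; rewrite /im /= !mul1r; case: (f p) => ? ?; case: (g p) => ? ?. Qed.
Lemma reZ c f : re (fun p => c * f p) = fun p => complex.Re c * re f p + (- complex.Im c) * im f p.
Proof. apply: funext => p; rewrite /re /im /=; case: c => ? ?; case: (f p) => ? ? /=; ring. Qed.
Lemma imZ c f : im (fun p => c * f p) = fun p => complex.Im c * re f p + complex.Re c * im f p.
Proof. apply: funext => p; rewrite /re /im /=; case: c => ? ?; case: (f p) => ? ? /=; ring. Qed.

Lemma ipD f g h : L2 m f -> L2 m g -> L2 m h -> L2 m (f \+ g) ->
  L2_inner m (f \+ g) h = L2_inner m f h + L2_inner m g h.
Proof.
move=> Lf Lg Lh Lfg; rewrite (ip_eq Lfg Lh) (ip_eq Lf Lh) (ip_eq Lg Lh).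
have [rf if_] := L2_RL2 Lf; have [rg ig] := L2_RL2 Lg; have [rh ih] := L2_RL2 Lh.
rewrite reD imD !PL //.
by simpc; ceq => /=; ring.
Qed.

Lemma ipZ c f h : L2 m f -> L2 m h -> L2 m (fun p => c * f p) ->
  L2_inner m (fun p => c * f p) h = c * L2_inner m f h.
Proof.
move=> Lf Lh Lcf; rewrite (ip_eq Lcf Lh) (ip_eq Lf Lh).
have [rf if_] := L2_RL2 Lf; have [rh ih] := L2_RL2 Lh.
rewrite reZ imZ !PL //.
by clear Lcf; case: c => ? ?; simpc; ceq => /=; ring.
Qed.

Lemma ipC f g : L2 m f -> L2 m g -> L2_inner m g f = conjc (L2_inner m f g).
Proof.
move=> Lf Lg; rewrite (ip_eq Lf Lg) (ip_eq Lg Lf).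
rewrite (PC (re g) (re f)) (PC (im g) (im f)) (PC (im g) (re f)) (PC (re g) (im f)).
by simpc; ceq => /=; ring.
Qed.

Lemma ipP f : L2 m f -> 0 <= complex.Re (L2_inner m f f).
Proof. by move=> Lf; rewrite (ip_eq Lf Lf) /= addr_ge0 // P_ge0. Qed.

Lemma cint f g : L2 m f -> L2 m g -> cintegrable m (fun p => f p * conjc (g p)).
Proof.
move=> Lf Lg; have [rf if_] := L2_RL2 Lf; have [rg ig] := L2_RL2 Lg.
split.
- have -> : (fun p => (complex.Re (f p * conjc (g p)))%:E) =
      (EFin \o (fun p => re f p * re g p)) \+ (EFin \o (fun p => im f p * im g p)).
    apply: funext => p; rewrite /= -EFinD; congr EFin.
    by rewrite /re /im; case: (f p) => ? ?; case: (g p) => ? ?; simpc.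
  by apply: integrableD => //; exact: prod_int.
- have -> : (fun p => (complex.Im (f p * conjc (g p)))%:E) =
      (EFin \o (fun p => im f p * re g p)) \+ (EFin \o (fun p => -1 * (re f p * im g p))).
    apply: funext => p; rewrite /= -EFinD; congr EFin.
    by rewrite /re /im; case: (f p) => ? ?; case: (g p) => ? ?; simpc => /=; ring.
  by apply: integrableD => //; [exact: prod_int | exact: intZ].
Qed.

Lemma subE (f g : T -> R[i]) : (f \- g) = (fun p => f p + -1 * g p).
Proof. by apply: funext => p; rewrite /= mulN1r. Qed.

End Conc.

Unset Implicit Arguments.
Set Strict Implicit.
Local Close Scope complex_scope.

Theorem proposition4p1 (R : realType) (d' : measure_display)
  (G : topologicalZmodType) (Y : measurableType d')
  (nu : {measure set Borel G -> \bar R}) (lam : {measure set Y -> \bar R})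
  (m : {measure set (Borel G * Y) -> \bar R})
  (H : set (Borel G * Y -> R[i])) (K : G -> Y -> Borel G * Y -> R[i])
  (T : (Borel G * Y -> R[i]) -> (Borel G * Y -> R[i])) :
  LCA_group G ->
  haar_measure nu ->
  is_product_measure nu lam m ->
  L2_hilbert_subspace m H ->
  reproducing_kernel m H K ->
  (forall (x u : G) (y v : Y), K x y (u, v) = K 0 y (u - x, v)) ->
  (forall (a : G) f, H f -> H (rho a f)) ->
  commutant m H T ->
  let KT := fun (x : G) (y : Y) (u : G) (v : Y) => T (K u v) (x, y) in
  [/\ (forall f, H f -> forall (x : G) (y : Y),
         cintegrable m (fun p => KT x y p.1 p.2 * f p) /\
         T f (x, y) = cintegral m (fun p => KT x y p.1 p.2 * f p)),
      (forall (x u : G) (y v : Y), KT x y u v = KT (x - u) y 0 v),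
      (forall v : Y, H (fun p => KT p.1 p.2 0 v)) &
      (forall y : Y, H (fun p => conjc (KT 0 y p.1 p.2)))].
Proof.
move=> _ _ _ [HL2 H0 Hadd Hscal Hcomp] rk Ktr rhoH [[TH TD TZ [MT TB]] Tcomm] KT.
pose add := fun f g : Borel G * Y -> R[i] => f \+ g.
pose scal := fun (c : R[i]) (f : Borel G * Y -> R[i]) => fun p => c * f p.
have iD : forall f g h, H f -> H g -> H h ->
    L2_inner m (add f g) h = L2_inner m f h + L2_inner m g h.
  move=> f g h Hf Hg Hh; apply: ipD; apply: HL2 => //; exact: Hadd.
have iZ : forall c f h, H f -> H h -> L2_inner m (scal c f) h = c * L2_inner m f h.
  move=> c f h Hf Hh; apply: ipZ; apply: HL2 => //; exact: Hscal.
have iC : forall f g, H f -> H g -> L2_inner m g f = conjc (L2_inner m f g).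
  by move=> f g Hf Hg; apply: ipC; apply: HL2.
have iP : forall f, H f -> 0 <= complex.Re (L2_inner m f f).
  by move=> f Hf; apply: ipP; apply: HL2.
have Had : forall f g, H f -> H g -> H (add f g) by exact: Hadd.
have Hsc : forall c f, H f -> H (scal c f) by exact: Hscal.
have compl : forall u : nat -> Borel G * Y -> R[i], (forall n, H (u n)) ->
  (forall e : R, 0 < e -> exists N0, forall n k, (N0 <= n)%N -> (N0 <= k)%N ->
      complex.Re (L2_inner m (add (u n) (scal (-1) (u k))) (add (u n) (scal (-1) (u k)))) < e) ->
  exists2 g, H g & forall e : R, 0 < e -> exists N0, forall n, (N0 <= n)%N ->
      complex.Re (L2_inner m (add (u n) (scal (-1) g)) (add (u n) (scal (-1) g))) < e.
  move=> u Hu hc.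
  have hc' : forall e : R, 0 < e -> exists N0, forall n k, (N0 <= n)%N -> (N0 <= k)%N ->
      L2_norm2 m (u n \- u k) < e.
    move=> e e0; have [N0 hN] := hc e e0; exists N0 => n k hn hk.
    by rewrite /L2_norm2 subE; exact: hN n k hn hk.
  have [g Hg hg] := Hcomp u Hu hc'.
  exists g => // e e0; have [N0 hN] := hg e e0; exists N0 => n hn.
  by have := hN n hn; rewrite /L2_norm2 subE.
have RZ : forall (x : G) (y : Y), exists2 g, H g &
    forall f, H f -> T f (x, y) = L2_inner m f g.
  move=> x y.
  have [HK rkK] := rk x y.
  apply: (@riesz R _ H add scal (L2_inner m) (fun=> 0) H0 Had Hsc iD iZ iC iP
    (fun f => T f (x, y)) (MT * complex.Re (L2_inner m (K x y) (K x y)))).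
  - by move=> f g Hf Hg; rewrite /add TD.
  - by move=> c f Hf; rewrite /scal TZ.
  - move=> f Hf; rewrite (rkK _ (TH f Hf)).
    apply: le_trans (CS Had Hsc iD iZ iC iP (TH f Hf) HK) _.
    have := TB f Hf; have := iP _ HK.
    move=> a b; rewrite mulrAC; apply: ler_wpM2r => //.
  - exact: compl.
have KTe : forall (x : G) (y : Y) g, H g -> (forall f, H f -> T f (x, y) = L2_inner m f g) ->
    forall u v, KT x y u v = conjc (g (u, v)).
  move=> x y g Hg hg u v; rewrite /KT (hg _ (rk u v).1).
  by rewrite ((rk u v).2 g Hg) (iC _ _ (rk u v).1 Hg) conjcK.
split.
- move=> f Hf x y; have [g Hg hg] := RZ x y.
  have -> : (fun p => KT x y p.1 p.2 * f p) = (fun p => f p * conjc (g p)).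
    by apply: funext => -[u v]; rewrite (KTe x y g Hg hg) mulrC.
  split; first exact: cint (HL2 _ Hf) (HL2 _ Hg).
  by rewrite (hg f Hf).
- move=> x u y v; rewrite /KT.
  have eK : K u v = rho u (K 0 v).
    by apply: funext => p; case: p => a b; rewrite /rho /=; exact: Ktr.
  by rewrite eK (Tcomm u _ (rk 0 v).1) /rho.
- move=> v; have -> : (fun p => KT p.1 p.2 0 v) = T (K 0 v) by apply: funext => -[a b].
  exact: TH _ (rk 0 v).1.
- move=> y; have [g Hg hg] := RZ 0 y.
  have -> : (fun p => conjc (KT 0 y p.1 p.2)) = g.
    by apply: funext => -[u v]; rewrite (KTe 0 y g Hg hg) conjcK.
  exact: Hg.
Qed.
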